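(* Let $X$ be a compact space and $\mathcal{A}$ a dense subspace of $C(X)$ (real continuous functions, supremum norm) containing the constant functions and closed under finite lattice operations ($f,g\in\mathcal{A}\Rightarrow f\vee g\in\mathcal{A}$). Let $L$ be a Lip-norm on $\mathcal{A}$ satisfying $L(f\vee g)\le L(f)\vee L(g)$ for all $f,g\in\mathcal{A}$, and let $\bar L$ be its closure on $C(X)$. Let $\mathcal{F}$ be a nonempty norm-bounded subset of $\mathcal{A}$ for which there is a constant $k$ with $L(f)\le k$ for all $f\in\mathcal{F}$, and let $g=\sup\{f: f\in\mathcal{F}\}$ (pointwise). Then $g\in C(X)$ and $\bar L(g)\le k$.
   Context: $\mathcal{A}$ is an order-unit space with order unit $1$ and the supremum norm. A Lip-norm on $\mathcal{A}$ is a finite-valued seminorm $L$ with: (1) $L(f)=0$ iff $f$ is constant; (2) $\{f\in\mathcal{A}:L(f)\le1\}$ is norm-closed in $\mathcal{A}$; (3) the image of $\{f:L(f)\le1\}$ in $\mathcal{A}/\mathbb{R}1$ is totally bounded for the quotient norm. The closure $\bar L$: with $\bar{\mathcal{L}}_1$ the closure in $C(X)$ of $\{f\in\mathcal{A}:L(f)\le1\}$, $\bar L(h)=\inf\{r\ge0:h\in r\bar{\mathcal{L}}_1\}\in[0,+\infty]$. *)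

(* Defs.v *)
From HB Require Import structures.
From mathcomp Require Import all_boot all_order all_algebra.
From mathcomp Require Import all_classical all_reals all_analysis.
Set Implicit Arguments. Unset Strict Implicit. Unset Printing Implicit Defensive.
Import Order.TTheory GRing.Theory Num.Theory.
Import numFieldNormedType.Exports.
Local Open Scope classical_set_scope.
Local Open Scope ring_scope.

Section Defs.
Variables (R : realType) (X : topologicalType).

Definition supnorm (f : X -> R) : R := sup [set `|f x| | x in [set: X]].

Definition is_subspace (A : set (X -> R)) : Prop :=
  A (fun _ => 0) /\
  (forall f g, A f -> A g -> A (fun x => f x + g x)) /\
  (forall (c : R) f, A f -> A (fun x => c * f x)).

(* L is a Lip-norm on the order-unit space A (order unit = constant 1,
   supremum norm). *)
Definition lip_norm (A : set (X -> R)) (L : (X -> R) -> R) : Prop :=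
  (forall f g, A f -> A g -> L (fun x => f x + g x) <= L f + L g) /\
  (forall (c : R) f, A f -> L (fun x => c * f x) = `|c| * L f) /\
  (forall f, A f -> (L f = 0 <-> exists c : R, f = (fun _ => c))) /\
  (forall f, A f ->
     (forall e : R, 0 < e -> exists h, [/\ A h, L h <= 1 &
          supnorm (fun x => f x - h x) < e]) -> L f <= 1) /\
  (* (3) image of {L <= 1} in A / R1 is totally bounded for the quotient norm
         ||[f]|| = inf_c ||f - c 1|| *)
  (forall e : R, 0 < e -> exists s : seq (X -> R),
     (forall h, h \in s -> A h /\ L h <= 1) /\
     forall f, A f -> L f <= 1 -> exists2 h, h \in s &
        exists c : R, supnorm (fun x => f x - h x - c) < e).

Definition barL1 (A : set (X -> R)) (L : (X -> R) -> R) : set (X -> R) :=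
  [set h | continuous h /\
     forall e : R, 0 < e -> exists f, [/\ A f, L f <= 1 &
        supnorm (fun x => h x - f x) < e]].

(* closure of L on C(X): inf {r >= 0 | h in r * barL1}, in [0, +oo] *)
Definition barL (A : set (X -> R)) (L : (X -> R) -> R) (h : X -> R) : \bar R :=
  ereal_inf [set r%:E | r in [set r : R | 0 <= r /\
     exists2 f, barL1 A L f & h = (fun x => r * f x)]].

End Defs.

(* Main.v *)
Require Import Defs.
From HB Require Import structures.
From mathcomp Require Import all_boot all_order all_algebra.
From mathcomp Require Import all_classical all_reals all_analysis.
From mathcomp Require Import ring lra.
Import Order.TTheory GRing.Theory Num.Theory.
Import numFieldNormedType.Exports.
Local Open Scope classical_set_scope.
Local Open Scope ring_scope.

Section H.
Variables (R : realType) (X : topologicalType).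
Hypothesis hX : compact [set: X].

Lemma cont_bnd (u : X -> R) : continuous u -> exists B : R, forall x, `|u x| <= B.
Proof.
move=> uc.
have : compact (u @` [set: X]).
  by apply: continuous_compact => //; apply: continuous_subspaceT.
move=> /compact_bounded [M [Mreal]] /(_ (`|M| + 1)).
rewrite (le_lt_trans (ler_norm _)) ?ltrDl// => /(_ erefl) aM.
by exists (`|M| + 1) => x; apply: aM; exists x.
Qed.

Lemma supnorm_ge (u : X -> R) x : continuous u -> `|u x| <= supnorm u.
Proof.
move=> /cont_bnd [B HB]; apply: ub_le_sup; last by exists x.
by exists B => _ [y _ <-].
Qed.

Lemma supnorm_le (u : X -> R) (B : R) : 0 <= B -> (forall x, `|u x| <= B) -> supnorm u <= B.
Proof.
move=> B0 HB; rewrite /supnorm.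
have [[x _]|nX] := pselect (exists x : X, True).
  apply: ge_sup; first by exists `|u x|, x.
  by move=> _ [z _ <-]; apply: HB.
have -> : [set `|u x| | x in [set: X]] = set0.
  by apply/seteqP; split => // t [z _ _]; case: nX; exists z.
by rewrite sup0.
Qed.

Lemma contB (f g : X -> R) : continuous f -> continuous g -> continuous (fun x => f x - g x).
Proof. by move=> cf cg x; exact: (continuousB (cf x) (cg x)). Qed.

Lemma contMl (c : R) (f : X -> R) : continuous f -> continuous (fun x => c * f x).
Proof. move=> cf x. have := @continuousM R X (fun _ => c) f x (@cst_continuous X R c x) (cf x). exact. Qed.

Lemma cont_cst (c : R) : continuous (fun _ : X => c).
Proof. exact: cst_continuous. Qed.

Variables (A : set (X -> R)).
Hypothesis hAC : forall f, A f -> continuous f.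
Hypothesis hAsub : is_subspace A.
Hypothesis hAmax : forall f g, A f -> A g -> A (fun x => Num.max (f x) (g x)).
Variable L : (X -> R) -> R.
Hypothesis hL : lip_norm A L.
Hypothesis hLmax : forall f g, A f -> A g ->
     L (fun x => Num.max (f x) (g x)) <= Num.max (L f) (L g).

Lemma L_ge0 f : A f -> 0 <= L f.
Proof.
move=> Af; have [hLD [hLZ _]] := hL; have [_ [_ hAZ]] := hAsub.
have e1 : (fun x => f x + (-1) * f x) = (fun x => 0 * f x).
  by apply: funext => x; rewrite mul0r mulN1r subrr.
have := hLD f _ Af (hAZ (-1) f Af); rewrite e1 hLZ // hLZ // normr0 mul0r normrN normr1 mul1r.
lra.
Qed.

Variables (F : set (X -> R)) (M : R) (k : R).
Hypothesis hFA : F `<=` A.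
Hypothesis hFb : forall f, F f -> supnorm f <= M.
Hypothesis hk : forall f, F f -> L f <= k.

Lemma Fbnd f x : F f -> `|f x| <= M.
Proof. move=> Ff; have := @supnorm_ge f x (hAC _ (hFA _ Ff)); have := hFb _ Ff; lra. Qed.

Fixpoint mx (f0 : X -> R) (l : seq (X -> R)) : X -> R :=
  match l with
  | [::] => f0
  | f :: l' => fun x => Num.max (f x) (mx f0 l' x)
  end.

Lemma mx_prop (f0 : X -> R) (p : (X -> R) -> (X -> R)) (s : seq (X -> R)) :
  F f0 -> (forall h, F (p h)) ->
  [/\ A (mx f0 (map p s)), L (mx f0 (map p s)) <= k,
     (forall x, exists2 f, F f & mx f0 (map p s) x = f x) &
     (forall h x, h \in s -> p h x <= mx f0 (map p s) x)].
Proof.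
move=> Ff0 Fp; elim: s => [|h s [IA IL IE II]] /=.
  split => //; [exact: hFA | exact: hk | by move=> x; exists f0].
split.
- by apply: hAmax => //; apply: hFA.
- apply: (le_trans (hLmax _ _ (hFA _ (Fp h)) IA)).
  by rewrite ge_max (hk _ (Fp h)) IL.
- move=> x; have [f Ff ->] := IE x; rewrite /Num.max.
  by case: ifP => _; [exists f | exists (p h)].
- move=> h' x; rewrite inE => /orP [/eqP ->|hs]; first by rewrite le_max lexx.
  by rewrite le_max (II _ _ hs) orbT.
Qed.


Hypothesis hF0 : F !=set0.

Lemma approx e : 0 < e -> exists m, [/\ A m, L m <= k & forall x,
  m x <= sup [set f x | f in F] /\ sup [set f x | f in F] <= m x + e].
Proof.
move=> e0.
have [f0 Ff0] := hF0.
have hub x : has_ubound [set f x | f in F].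
  by exists M => _ [f Ff <-]; exact: le_trans (ler_norm _) (Fbnd f x Ff).
have hne x : [set f x | f in F] !=set0 by exists (f0 x), f0.
have gge f x : F f -> f x <= sup [set f x | f in F].
  by move=> Ff; apply: (ub_le_sup (hub x)); exists f.
have [[x0 _]|nX] := pselect (exists x : X, True); last first.
  by exists f0; split; [exact: hFA | exact: hk | move=> x; case: nX; exists x].
pose kk := `|k| + 1.
have kk0 : 0 < kk by rewrite /kk; have := normr_ge0 k; lra.
pose d := e / (8 * kk).
have d0 : 0 < d by rewrite /d; apply: divr_gt0 => //; lra.
have Hd : kk * d = e / 8 by rewrite /d; field; rewrite gt_eqF.
have [_ [hLZ [_ [_ hTB]]]] := hL.
have [_ [hAD hAZ]] := hAsub.
have [s [hs1 hs2]] := hTB d d0.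
pose Fh h f := F f /\ exists c, supnorm (fun x => kk^-1 * f x - h x - c) < d.
have cover f : F f -> exists2 h, h \in s & Fh h f.
  move=> Ff; have Af := hFA _ Ff.
  have A' : A (fun x => kk^-1 * f x) := hAZ _ _ Af.
  have L' : L (fun x => kk^-1 * f x) <= 1.
    rewrite hLZ // ger0_norm ?invr_ge0 ?(ltW kk0) // mulrC ler_pdivrMr // mul1r.
    have := hk _ Ff; have := ler_norm k; rewrite /kk; lra.
  have [h hs [c hc]] := hs2 _ A' L'.
  by exists h => //; split => //; exists c; exact: hc.
have ptw h f : h \in s -> Fh h f -> exists c, forall x, `|kk^-1 * f x - h x - c| < d.
  move=> hs [Ff [c hc]]; exists c => x; apply: le_lt_trans hc.
  apply: supnorm_ge; apply: contB; [apply: contB|exact: cont_cst].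
    by apply: contMl; apply: hAC; apply: hFA.
  by apply: hAC; have := hs1 _ hs; case.
have key h f1 f2 : h \in s -> Fh h f1 -> Fh h f2 -> forall x,
    f1 x - f2 x <= f1 x0 - f2 x0 + e / 2.
  move=> hs H1 H2 x.
  have [c1 P1] := ptw h f1 hs H1; have [c2 P2] := ptw h f2 hs H2.
  have E (z : X) (f : X -> R) : f z = kk * (kk^-1 * f z) by rewrite mulrA mulfV ?gt_eqF // mul1r.
  have Ha : kk^-1 * f1 x - kk^-1 * f2 x <= kk^-1 * f1 x0 - kk^-1 * f2 x0 + 4 * d.
    have := P1 x; have := P1 x0; have := P2 x; have := P2 x0.
    rewrite !ltr_norml => /andP [Q1 Q2] /andP [Q3 Q4] /andP [Q5 Q6] /andP [Q7 Q8].
    lra.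
  have := ler_wpM2l (ltW kk0) Ha; rewrite !mulrDr !mulrN !mulrA mulfV ?gt_eqF // !mul1r.
  have -> : kk * 4 * e / (8 * kk) = e / 2 by field; rewrite gt_eqF.
  lra.
pose S h := sup [set f x0 | f in Fh h].
have pick h : exists p, F p /\ ((exists f, Fh h f) -> Fh h p /\ S h - e / 2 < p x0).
  have [[f1 Hf1]|nE] := pselect (exists f, Fh h f); last by exists f0.
  have hs : has_sup [set f x0 | f in Fh h].
    split; first by exists (f1 x0), f1.
    by exists M => _ [f [Ff _] <-]; exact: le_trans (ler_norm _) (Fbnd f x0 Ff).
  have e20 : 0 < e / 2 by lra.
  have [v [p Hp <-] Hv] := sup_adherent e20 hs.
  by exists p; split => //; case: Hp.
have [p Hp] := choice pick.
have [mA mL mE mI] := mx_prop f0 p s Ff0 (fun h => (Hp h).1).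
exists (mx f0 (map p s)); split => // x; split.
  by have [f Ff ->] := mE x; exact: gge.
apply: ge_sup (hne x) _ => _ [f Ff <-].
have [h hs Hfh] := cover f Ff.
have [Fph Sph] := (Hp h).2 (ex_intro _ f Hfh).
have k1 := key h f (p h) hs Hfh Fph x.
have k2 : f x0 <= S h.
  apply: ub_le_sup; last by exists f.
  by exists M => _ [f' [Ff' _] <-]; exact: le_trans (ler_norm _) (Fbnd f' x0 Ff').
have k3 := mI h x hs.
lra.
Qed.

End H.

Theorem lemma8p2 (R : realType) (X : topologicalType)
  (hX : compact [set: X]) (hXH : hausdorff_space X)
  (A : set (X -> R))
  (hAC : forall f, A f -> continuous f)
  (hAsub : is_subspace A)
  (hAcst : forall c : R, A (fun _ => c))
  (hAmax : forall f g, A f -> A g -> A (fun x => Num.max (f x) (g x)))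
  (hAdense : forall h : X -> R, continuous h ->
     forall e : R, 0 < e -> exists2 f, A f & supnorm (fun x => h x - f x) < e)
  (L : (X -> R) -> R)
  (hL : lip_norm A L)
  (hLmax : forall f g, A f -> A g ->
     L (fun x => Num.max (f x) (g x)) <= Num.max (L f) (L g))
  (F : set (X -> R))
  (hFA : F `<=` A)
  (hF0 : F !=set0)
  (hFb : exists M : R, forall f, F f -> supnorm f <= M)
  (k : R)
  (hk : forall f, F f -> L f <= k) :
  let g := fun x : X => sup [set f x | f in F] in
  continuous g /\ (barL A L g <= k%:E)%E.
Proof.
move=> g; have [M hM] := hFb.
have ap (e : R) (e0 : 0 < e) := @approx R X hX A hAC hAsub hAmax L hL hLmax F M k hFA hM hk hF0 e e0.
have gc : continuous g.
  move=> x; apply/cvgrPdist_lt => eps eps0.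
  have e3 : 0 < eps / 3 by lra.
  have [m [mA _ mx]] := ap _ e3.
  have /cvgrPdist_lt /(_ _ e3) := hAC m mA x.
  apply: filterS => y Hy.
  have := mx x; have := mx y; rewrite /g.
  move: Hy; rewrite !ltr_norml => /andP [Q1 Q2] [Q3 Q4] [Q5 Q6].
  apply/andP; split; lra.
split => //.
have [f0 Ff0] := hF0.
have k0 : 0 <= k := le_trans (@L_ge0 R X A hAsub L hL f0 (hFA _ Ff0)) (hk _ Ff0).
have [hLD [hLZ _]] := hL; have [_ [_ hAZ]] := hAsub.
rewrite /barL; apply/lee_addgt0Pr => eps eps0.
apply: ereal_inf_lbound; exists (k + eps) => //.
have r0 : 0 < k + eps by lra.
split; first exact: ltW.
exists (fun x => (k + eps)^-1 * g x); last first.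
  by apply: funext => x; rewrite mulrA mulfV ?gt_eqF // mul1r.
split; first exact: contMl.
move=> e' e'0.
have e'r : 0 < e' * (k + eps) / 2 by apply: divr_gt0 => //; apply: mulr_gt0.
have [m [mA mL mx]] := ap _ e'r.
exists (fun x => (k + eps)^-1 * m x); split.
- exact: hAZ.
- rewrite hLZ // ger0_norm ?invr_ge0 ?(ltW r0) // mulrC ler_pdivrMr // mul1r.
  lra.
- have e'2 : e' / 2 < e' by lra.
  apply: le_lt_trans e'2; apply: supnorm_le; first lra.
  move=> x; rewrite -mulrBr normrM gtr0_norm ?invr_gt0 // mulrC ler_pdivrMr //.
  have := mx x; rewrite /g => -[Q1 Q2].
  rewrite ler_norml; apply/andP; split.
    have : 0 <= e' / 2 * (k + eps) by apply: mulr_ge0; lra.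
    lra.
  have -> : e' / 2 * (k + eps) = e' * (k + eps) / 2 by rewrite mulrAC.
  lra.
Qed.
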